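(* For $A,x\in\mathbb{R}$ define $E_0(A,x):=1$, $E_1(A,x):=e^{(1-x)A}$ and, for $n\ge2$, \[ E_n(A,x):=\begin{cases} \exp\!\Big(\big[x(E_1+E_3+\cdots+E_{n-1})-\tfrac n2\big]A\Big), & n \text{ even},\\[4pt] \exp\!\Big(\big[\tfrac{n+1}{2}-x(E_0+E_2+\cdots+E_{n-1})\big]A\Big), & n\text{ odd},\end{cases} \] with all $E_j$ evaluated at $(A,x)$. Define $\varphi_1(A,x):=x-1$, $\varphi_n(A,x):=\varphi_{n-1}(A,x)-1+xE_{n-1}(A,x)$ for $n\ge2$, and the polynomial $p_n(A):=\frac{\partial\varphi_n}{\partial x}(A,1)$. Then $p_2\mid p_{2n}$ for all $n\ge1$. In particular, since $p_2(A)=2-A$, $A=2$ is a root of $p_{2n}$ for every $n\ge1$. *)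

(* Defs.v *)
From HB Require Import structures.
From mathcomp Require Import all_boot all_order all_algebra.
From mathcomp Require Import all_classical all_reals all_analysis.
Set Implicit Arguments. Unset Strict Implicit. Unset Printing Implicit Defensive.
Import Order.TTheory GRing.Theory Num.Theory.
Import numFieldNormedType.Exports.
Local Open Scope ring_scope.

Section E.
Variable R : realType.

(* Given s = [:: E_0; ...; E_(n-1)], the value E_n (n >= 1). *)
Definition Enext (A x : R) (n : nat) (s : seq R) : R :=
  if n == 1%N then expR ((1 - x) * A)
  else if odd n then
    expR ((((n.+1)./2)%:R - x * \sum_(j < n | ~~ odd j) s`_j) * A)
  else
    expR ((x * \sum_(j < n | odd j) s`_j - (n./2)%:R) * A).

Fixpoint Eseq (A x : R) (n : nat) : seq R :=
  match n with
  | 0 => [:: 1]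
  | n'.+1 => let s := Eseq A x n' in rcons s (Enext A x n'.+1 s)
  end.

Definition E (A x : R) (n : nat) : R := (Eseq A x n)`_n.

(* phi_1 = x - 1, phi_n = phi_(n-1) - 1 + x E_(n-1); phi_0 is unused junk (0). *)
Fixpoint phi (A x : R) (n : nat) : R :=
  match n with
  | 0 => 0
  | n'.+1 => if n' is 0 then x - 1 else phi A x n' - 1 + x * E A x n'
  end.

Definition p (n : nat) (A : R) : R := derive1 (fun x => phi A x n) 1.

End E.

(* Main.v *)
Require Import Defs.
From HB Require Import structures.
From mathcomp Require Import all_boot all_order all_algebra.
From mathcomp Require Import all_classical all_reals all_analysis.
From mathcomp Require Import ring lra zify.
Import Order.TTheory GRing.Theory Num.Theory.
Import numFieldNormedType.Exports.
Local Open Scope ring_scope.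

Fixpoint gen {T : Type} (f : nat -> seq T -> T) (a : T) (n : nat) : seq T :=
  match n with
  | 0 => [:: a]
  | n'.+1 => rcons (gen f a n') (f n'.+1 (gen f a n'))
  end.

Lemma size_gen T f (a : T) n : size (gen f a n) = n.+1.
Proof. by elim: n => //= n IH; rewrite size_rcons IH. Qed.

Lemma nth_gen T f (a x0 : T) n j : (j <= n)%N -> nth x0 (gen f a n) j = nth x0 (gen f a j) j.
Proof.
elim: n => [|n IH] hj; first by case: j hj.
have [hjn|hjn] := leqP j n.
  by rewrite /= nth_rcons size_gen ltnS hjn IH.
by have -> : j = n.+1 by apply/eqP; rewrite eqn_leq hj hjn.
Qed.

Lemma gen_last T f (a x0 : T) n : nth x0 (gen f a n.+1) n.+1 = f n.+1 (gen f a n).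
Proof. by rewrite /= nth_rcons size_gen ltnn eqxx. Qed.

Section S.
Variable R : realType.
Implicit Types f g : R -> R.
Lemma dD f g (x a b : R) : is_derive x 1 f a -> is_derive x 1 g b ->
  is_derive x 1 (fun y => f y + g y) (a + b).
Proof. move=> ? ?; exact: is_deriveD. Qed.
Lemma dM f g (x a b : R) : is_derive x 1 f a -> is_derive x 1 g b ->
  is_derive x 1 (fun y => f y * g y) (f x * b + g x * a).
Proof. move=> ? ?; exact: is_deriveM. Qed.
Lemma dN f (x a : R) : is_derive x 1 f a -> is_derive x 1 (fun y => - f y) (- a).
Proof. move=> ?; exact: is_deriveN. Qed.
Lemma dC (c x : R) : is_derive x 1 (fun _ => c) 0.
Proof. exact: is_derive_cst. Qed.
Lemma dX (x : R) : is_derive x 1 (fun y => y) 1.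
Proof. exact: is_derive_id. Qed.
Lemma dexp f (x a : R) : is_derive x 1 f a -> is_derive x 1 (fun y => expR (f y)) (expR (f x) * a).
Proof. move=> h. exact: (is_derive1_comp (f:=expR) (g:=f)). Qed.

Arguments dD {f g x a b}. Arguments dM {f g x a b}. Arguments dN {f x a}.
Arguments dexp {f x a}. Arguments dC {c x}. Arguments dX {x}.

Lemma dsum n (h : nat -> R -> R) (dh : nat -> R) (x : R) :
  (forall i, (i < n)%N -> is_derive x 1 (h i) (dh i)) ->
  is_derive x 1 (fun y => \sum_(i < n) h i y) (\sum_(i < n) dh i).
Proof.
elim: n => [|n IH] H.
  have -> : (fun y => \sum_(i < 0) h i y) = (fun _ => 0).
    by apply/funext => y; rewrite big_ord0.
  by rewrite big_ord0; apply: dC.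
have -> : (fun y => \sum_(i < n.+1) h i y) = (fun y => \sum_(i < n) h i y + h n y).
  by apply/funext => y; rewrite big_ord_recr.
rewrite big_ord_recr /=; apply: dD; last exact: H.
by apply: IH => i hi; apply: H; rewrite ltnS ltnW.
Qed.

Lemma dsumP n (P : pred nat) (h : nat -> R -> R) (dh : nat -> R) (x : R) :
  (forall i, (i < n)%N -> is_derive x 1 (h i) (dh i)) ->
  is_derive x 1 (fun y => \sum_(i < n | P i) h i y) (\sum_(i < n | P i) dh i).
Proof.
move=> H.
have -> : (fun y => \sum_(i < n | P i) h i y) = (fun y => \sum_(i < n) (fun i y => if P i then h i y else 0) i y).
  by apply/funext => y; rewrite big_mkcond.
rewrite big_mkcond.
apply: (@dsum n (fun i y => if P i then h i y else 0) (fun i => if P i then dh i else 0)) => i hi /=.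
by case: (P i); [apply: H | apply: dC].
Qed.

Lemma EseqE (A x : R) n : Eseq A x n = gen (Enext A x) 1 n.
Proof. by elim: n => //= n ->. Qed.

Lemma sum_odd1 n : \sum_(j < n | odd j) (1 : R) = (n./2)%:R.
Proof.
elim: n => [|n IH]; first by rewrite big_ord0.
rewrite big_mkcond big_ord_recr -big_mkcond /= IH.
rewrite ?uphalf_half; try rewrite -[(n.+1)./2]/(uphalf n) uphalf_half.
by case: (odd n); rewrite ?addr0 ?add0n // natrD addrC.
Qed.

Lemma sum_even1 n : \sum_(j < n | ~~ odd j) (1 : R) = ((n.+1)./2)%:R.
Proof.
elim: n => [|n IH]; first by rewrite big_ord0.
rewrite big_mkcond big_ord_recr -big_mkcond /= IH.
rewrite ?uphalf_half; try rewrite -[(n.+1)./2]/(uphalf n) uphalf_half.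
case: (odd n) => /=; rewrite ?addr0 ?add0n ?add1n //; by rewrite natr1.
Qed.


Definition enext (n : nat) (s : seq {poly R}) : {poly R} :=
  if n == 1%N then - 'X
  else if odd n then - 'X * (((n.+1)./2)%:R%:P + \sum_(j < n | ~~ odd j) s`_j)
  else 'X * ((n./2)%:R%:P + \sum_(j < n | odd j) s`_j).

Definition es n := (gen enext 0 n)`_n.

Lemma es_succ n : es n.+1 =
  if n.+1 == 1%N then - 'X
  else if odd n.+1 then - 'X * (((n.+2)./2)%:R%:P + \sum_(j < n.+1 | ~~ odd j) es j)
  else 'X * ((n.+1./2)%:R%:P + \sum_(j < n.+1 | odd j) es j).
Proof.
rewrite {1}/es gen_last [enext _ _]/enext.
have H2 : forall (P : pred nat), \sum_(j < n.+1 | P j) (gen enext 0 n)`_j = \sum_(j < n.+1 | P j) es j.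
  move=> P; apply: eq_bigr => j _.
  by rewrite /es (nth_gen _ _ _ _ _ _ (ltn_ord j : (j <= n)%N)).
by rewrite H2 (H2 (fun j => ~~ odd j)).
Qed.

Lemma Esucc (A x : R) n : E A x n.+1 = 
  if n.+1 == 1%N then expR ((1 - x) * A)
  else if odd n.+1 then
    expR ((((n.+2)./2)%:R - x * \sum_(j < n.+1 | ~~ odd j) E A x j) * A)
  else
    expR ((x * \sum_(j < n.+1 | odd j) E A x j - (n.+1./2)%:R) * A).
Proof.
rewrite /E EseqE gen_last /Enext.
have H2 : forall (P : pred nat), \sum_(j < n.+1 | P j) (gen (Enext A x) 1 n)`_j = \sum_(j < n.+1 | P j) (Eseq A x j)`_j.
  move=> P; apply: eq_bigr => j _.
  by rewrite (nth_gen _ _ _ _ _ _ (ltn_ord j : (j <= n)%N)) EseqE.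
by rewrite H2 (H2 (fun j => ~~ odd j)).
Qed.


Lemma Ekey (A : R) n : E A 1 n = 1 /\ is_derive (1:R) 1 (fun x => E A x n) (es n).[A].
Proof.
elim/ltn_ind: n => -[|m] IH.
  split => //.
  have -> : (fun x => E A x 0) = (fun _ => 1) by [].
  rewrite [es 0]/es /= horner0; exact: dC.
rewrite es_succ.
case: m IH => [|m] IH.
  rewrite /=; split; first by rewrite Esucc /= subrr mul0r expR0.
  have -> : (fun x => E A x 1) = (fun x => expR ((1 - x) * A)).
    by apply/funext => x; rewrite Esucc.
  apply: is_derive_eq.
  rewrite hornerN hornerX subrr mul0r expR0 scale0r add0r -[A *: _]/(A * _).
  ring.
have IHd : forall (P : pred nat), is_derive (1:R) 1 (fun x => \sum_(j < m.+2 | P j) E A x j)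
    (\sum_(j < m.+2 | P j) (es j).[A]).
  move=> P; apply: (@dsumP m.+2 P (fun j x => E A x j) (fun j => (es j).[A])).
  by move=> i hi; case: (IH i hi).
have IH1 : forall (P : pred nat), \sum_(j < m.+2 | P j) E A 1 j = \sum_(j < m.+2 | P j) 1.
  by move=> P; apply: eq_bigr => j _; case: (IH j (ltn_ord j)).
have Ex : (fun x => E A x m.+2) = (fun x => if odd m.+2 then
    expR ((((m.+3)./2)%:R - x * \sum_(j < m.+2 | ~~ odd j) E A x j) * A)
  else
    expR ((x * \sum_(j < m.+2 | odd j) E A x j - (m.+2./2)%:R) * A)).
  by apply/funext => x; rewrite Esucc.
have E1 : E A 1 m.+2 = 1.
  rewrite Esucc /=; case: ifP => _;
  by rewrite mul1r ?(IH1 (fun j => ~~ odd j)) ?(IH1 odd) ?sum_even1 ?sum_odd1 subrr mul0r expR0.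
split => //.
rewrite Ex; rewrite [m.+2 == 1%N]/=.
case: ifP => ho.
  apply: (is_derive_eq (dexp (dM (dD dC (dN (dM dX (IHd (fun j => ~~ odd j))))) dC))).
  rewrite (IH1 (fun j => ~~ odd j)) sum_even1 mul1r subrr mul0r expR0.
  rewrite hornerM hornerN hornerX hornerD hornerC horner_sum; ring.
apply: (is_derive_eq (dexp (dM (dD (dM dX (IHd odd)) (dN dC)) dC))).
rewrite (IH1 odd) sum_odd1 mul1r subrr mul0r expR0.
rewrite hornerM hornerX hornerD hornerC horner_sum; ring.
Qed.


Definition PP n : {poly R} := (n%:R)%:P + \sum_(j < n) es j.

Lemma phi_der (A : R) n : is_derive (1:R) 1 (fun x => phi A x n.+1) (PP n.+1).[A].
Proof.
elim: n => [|n IH].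
  have -> : (fun x => phi A x 1) = (fun x => x + - 1) by [].
  apply: (is_derive_eq (dD dX (dN dC))).
  by rewrite /PP big_ord1 hornerD hornerC [es 0]/es /= horner0; ring.
have -> : (fun x => phi A x n.+2) = (fun x => phi A x n.+1 + - 1 + x * E A x n.+1) by [].
have [E1 Ed] := Ekey A n.+1.
apply: (is_derive_eq (dD (dD IH (dN dC)) (dM dX Ed))).
rewrite /PP [\sum_(j < n.+2) _]big_ord_recr /= E1 !hornerD !hornerC /=.
rewrite -[(n.+2)%:R]natr1; ring.
Qed.

Lemma pE (A : R) n : p n.+1 A = (PP n.+1).[A].
Proof.
have H := phi_der A n.
by rewrite /p derive1E derive_val.
Qed.

Definition pat (j : nat) : R := if (j %% 4 == 1)%N || (j %% 4 == 2)%N then -2 else 0.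

Lemma SO n : \sum_(j < n | odd j) pat j = - 2 * ((n + 2) %/ 4)%:R.
Proof.
elim: n => [|n IH]; first by rewrite big_ord0 mulr0.
rewrite big_mkcond big_ord_recr -big_mkcond /= IH /pat.
case: (boolP (odd n)) => ho /=; [case: ifP => hp|].
- have -> : ((n.+1 + 2) %/ 4 = (n + 2) %/ 4 + 1)%N by lia.
  rewrite natrD; ring.
- have -> : ((n.+1 + 2) %/ 4 = (n + 2) %/ 4)%N by lia.
  ring.
- have -> : ((n.+1 + 2) %/ 4 = (n + 2) %/ 4)%N by lia.
  ring.
Qed.

Lemma SE n : \sum_(j < n | ~~ odd j) pat j = - 2 * ((n + 1) %/ 4)%:R.
Proof.
elim: n => [|n IH]; first by rewrite big_ord0 mulr0.
rewrite big_mkcond big_ord_recr -big_mkcond /= IH /pat.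
case: (boolP (odd n)) => ho /=; [|case: ifP => hp].
- have -> : ((n.+1 + 1) %/ 4 = (n + 1) %/ 4)%N by lia.
  ring.
- have -> : ((n.+1 + 1) %/ 4 = (n + 1) %/ 4 + 1)%N by lia.
  rewrite natrD; ring.
- have -> : ((n.+1 + 1) %/ 4 = (n + 1) %/ 4)%N by lia.
  ring.
Qed.

Lemma es2 n : (es n).[2] = pat n.
Proof.
elim/ltn_ind: n => -[|[|m]] IH.
- by rewrite [es 0]/es /= horner0 /pat.
- by rewrite es_succ /= hornerN hornerX /pat.
have H : forall (P : pred nat), \sum_(j < m.+2 | P j) (es j).[2] = \sum_(j < m.+2 | P j) pat j.
  by move=> P; apply: eq_bigr => j _; apply: IH.
rewrite es_succ [m.+2 == 1%N]/=.
case: ifP => ho.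
  rewrite hornerM hornerN hornerX hornerD hornerC horner_sum (H (fun j => ~~ odd j)) SE.
  have -> : ((m.+3)./2 = 2 * ((m.+2 + 1) %/ 4) + (m.+2 %% 4 == 1))%N.
    rewrite -divn2; lia.
  rewrite /pat natrD natrM.
  case: ifP => hp.
    have -> : (m.+2 %% 4 == 1)%N by lia.
    rewrite /=; ring.
  have -> : (m.+2 %% 4 == 1)%N = false by lia.
  rewrite /=; ring.
rewrite hornerM hornerX hornerD hornerC horner_sum (H odd) SO.
have hx : ((m.+2)./2 + (m.+2 %% 4 == 2) = 2 * ((m.+2 + 2) %/ 4))%N.
  rewrite -divn2; lia.
have hx' : ((m.+2)./2)%:R = (2 * ((m.+2 + 2) %/ 4))%:R - ((m.+2 %% 4 == 2)%N : nat)%:R :> R.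
  by rewrite -hx natrD addrK.
rewrite hx' natrM /pat; case: ifP => hp.
  have -> : (m.+2 %% 4 == 2)%N by lia.
  rewrite /=; ring.
have -> : (m.+2 %% 4 == 2)%N = false by lia.
rewrite /=; ring.
Qed.

End S.

Lemma p2E (R : realType) (A : R) : p 2 A = 2 - A.
Proof.
rewrite (@pE R A 1) /PP big_ord_recr big_ord1 /= es_succ /= [es _ 0]/es /=.
rewrite !hornerD hornerC hornerN hornerX horner0; ring.
Qed.

Lemma root2 (R : realType) k : (PP R (2 * k.+1)).[2] = 0.
Proof.
rewrite /PP hornerD hornerC horner_sum.
under eq_bigr do rewrite es2.
rewrite (bigID (fun j : 'I__ => odd j)) /= SO SE.
have hk : ((2 * k.+1 + 2) %/ 4 + (2 * k.+1 + 1) %/ 4 = k.+1)%N by lia.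
rewrite -mulrDr -natrD hk; ring.
Qed.

Theorem lemma4p7 (R : realType) (n : nat) (hn : (0 < n)%N) :
  (exists q : {poly R}, forall A : R, p (2 * n) A = p 2 A * q.[A])
  /\ (forall A : R, p 2 A = 2 - A)
  /\ p (2 * n) (2 : R) = 0.
Proof.
case: n hn => // k _.
have e2 : (2 * k.+1 = (2 * k + 1).+1)%N by lia.
have hr : root (PP R (2 * k.+1)) 2 by apply/eqP; apply: root2.
have [q hq] := factor_theorem _ _ hr.
split; last split.
- exists (- q) => A; rewrite p2E e2 pE -e2 hq hornerM hornerN hornerD hornerN hornerX hornerC; ring.
- exact: p2E.
- by rewrite e2 pE -e2 root2.
Qed.
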